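(* Let $H$ be a Hilbert space and $U_{ik}\in B(H)$, $i,k=1,\dots,n$, operators satisfying relations (R1)–(R5). Then the matrix $U=(U_{kl})\in M_n(B(H))$ is unitary, i.e. $U^*U=1=UU^*$ in $M_n(B(H))$.
   Context: $n\ge2$, $\theta\in M_n(\mathbb R)$ skew-symmetric, $\omega_{ij}=e^{2\pi i\theta_{ij}}$. Relations, for all $i,j,k,l\in\{1,\dots,n\}$: (R1) $U_{ik}U_{jl}+\omega_{ji}U_{jk}U_{il}=\omega_{kl}U_{il}U_{jk}+\omega_{ji}\omega_{kl}U_{jl}U_{ik}$; (R2) $\sum_iU_{ik}U_{il}^*=\delta_{kl}1$; (R3) $\sum_iU_{il}^*U_{ik}=\delta_{kl}1$; (R4) $U_{jk}U_{ik}^*=0$ for $i\neq j$; (R5) $U_{ik}^*U_{jk}=0$ for $i\neq j$. *)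

(* Defs.v *)
From HB Require Import structures.
From mathcomp Require Import all_boot all_order all_algebra.
From mathcomp Require Import all_classical all_reals.
From mathcomp Require Import trigo.
From mathcomp.real_closed Require Import complex.
Set Implicit Arguments. Unset Strict Implicit. Unset Printing Implicit Defensive.
Import Order.TTheory GRing.Theory Num.Theory.
Local Open Scope ring_scope.
Local Open Scope complex_scope.

Section Hilbert.
Variables (R : realType) (V : lmodType R[i]).

(* We phrase
   Cauchy-ness and convergence with squared norms |<x,x>| (equivalent). *)
Definition sqnorm (ip : V -> V -> R[i]) (x : V) : R[i] := `|ip x x|.

Definition is_hilbert (ip : V -> V -> R[i]) : Prop :=
  [/\ (forall (a : R[i]) (x y z : V), ip (a *: x + y) z = a * ip x z + ip y z),
      (forall x y : V, ip y x = (ip x y)^*),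
      (forall x : V, 0 <= ip x x),
      (forall x : V, ip x x = 0 -> x = 0) &
      (forall u : nat -> V,
         (forall e : R[i], 0 < e -> exists N : nat, forall m p : nat,
             (N <= m)%N -> (N <= p)%N -> sqnorm ip (u m - u p) < e) ->
         exists v : V, forall e : R[i], 0 < e -> exists N : nat,
             forall m : nat, (N <= m)%N -> sqnorm ip (u m - v) < e)].

Definition bounded_op (ip : V -> V -> R[i]) (T : V -> V) : Prop :=
  (forall (a : R[i]) (x y : V), T (a *: x + y) = a *: T x + T y) /\
  exists M : R[i], forall x : V, sqnorm ip (T x) <= M * sqnorm ip x.

Definition is_adjoint (ip : V -> V -> R[i]) (T S : V -> V) : Prop :=
  forall x y : V, ip (T x) y = ip x (S y).
End Hilbert.

(* omega_{ij} = exp(2 pi i theta_{ij}) *)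
Definition omega (R : realType) (n : nat) (theta : 'M[R]_n) (i j : 'I_n) : R[i] :=
  (cos (2 * pi * theta i j)) +i* (sin (2 * pi * theta i j)).

(* The operator matrix U = (U_{kl}) in M_n(B(H)) with entrywise adjoints
   Us i k = U_{ik}^*; its matrix adjoint is (U^* )_{kl} = U_{lk}^*. *)
Definition op_mx_unitary (R : realType) (V : lmodType R[i]) (n : nat)
  (U Us : 'I_n -> 'I_n -> V -> V) : Prop :=
  (forall (k l : 'I_n) (x : V),
      \sum_(i < n) Us i k (U i l x) = if k == l then x else 0) /\
  (forall (k l : 'I_n) (x : V),
      \sum_(i < n) U k i (Us l i x) = if k == l then x else 0).

(* Main.v *)
Require Import Defs.
From HB Require Import structures.
From mathcomp Require Import all_boot all_order all_algebra.
From mathcomp Require Import all_classical all_reals.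
From mathcomp Require Import trigo.
From mathcomp.real_closed Require Import complex.
Import Order.TTheory GRing.Theory Num.Theory.
Local Open Scope ring_scope.
Local Open Scope complex_scope.

Section Aux.
Variables (R : realType) (V : lmodType R[i]) (ip : V -> V -> R[i]).
Hypothesis HL : forall (a : R[i]) (x y z : V), ip (a *: x + y) z = a * ip x z + ip y z.
Hypothesis HC : forall x y : V, ip y x = (ip x y)^*.

Lemma ip0l z : ip 0 z = 0.
Proof.
have := HL 1 0 0 z; rewrite scaler0 addr0 mul1r.
move/(congr1 (fun t => t - ip 0 z)); rewrite addrK subrr => ->//.
Qed.

Lemma ipDl x y z : ip (x + y) z = ip x z + ip y z.
Proof. by have := HL 1 x y z; rewrite scale1r mul1r. Qed.

Lemma ipNl x z : ip (- x) z = - ip x z.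
Proof. by have := HL (-1) x 0 z; rewrite addr0 ip0l addr0 scaleN1r mulN1r. Qed.

Lemma ipsuml (I : finType) (F : I -> V) z :
  ip (\sum_i F i) z = \sum_i ip (F i) z.
Proof. exact: (big_morph (fun v => ip v z) (fun a b => ipDl a b z) (ip0l z)). Qed.

Lemma ip0r z : ip z 0 = 0.
Proof. by rewrite HC ip0l conjc0. Qed.

Lemma ipDr x y z : ip z (x + y) = ip z x + ip z y.
Proof. by rewrite HC ipDl raddfD /= -!HC. Qed.

Lemma ipNr x z : ip z (- x) = - ip z x.
Proof. by rewrite HC ipNl raddfN /= -HC. Qed.

Lemma ipsumr (I : finType) (F : I -> V) z :
  ip z (\sum_i F i) = \sum_i ip z (F i).
Proof. exact: (big_morph (fun v => ip z v) (fun a b => ipDr a b z) (ip0r z)). Qed.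
End Aux.

Theorem proposition3p9 (R : realType) (V : lmodType R[i])
  (ip : V -> V -> R[i]) (Hip : is_hilbert ip)
  (n : nat) (hn : (2 <= n)%N) (theta : 'M[R]_n) (htheta : theta^T = - theta)
  (U Us : 'I_n -> 'I_n -> V -> V)
  (HUb : forall i k : 'I_n, bounded_op ip (U i k))
  (HUs : forall i k : 'I_n, is_adjoint ip (U i k) (Us i k))
  (R1 : forall (i j k l : 'I_n) (x : V),
      U i k (U j l x) + omega theta j i *: U j k (U i l x)
      = omega theta k l *: U i l (U j k x)
        + (omega theta j i * omega theta k l) *: U j l (U i k x))
  (R2 : forall (k l : 'I_n) (x : V),
      \sum_(i < n) U i k (Us i l x) = if k == l then x else 0)
  (R3 : forall (k l : 'I_n) (x : V),
      \sum_(i < n) Us i l (U i k x) = if k == l then x else 0)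
  (R4 : forall (i j k : 'I_n) (x : V), i != j -> U j k (Us i k x) = 0)
  (R5 : forall (i j k : 'I_n) (x : V), i != j -> Us i k (U j k x) = 0) :
  op_mx_unitary U Us.
Proof.
case: Hip => HL HC Hpos Hdef _.
have ipB : forall x y z, ip (x - y) z = ip x z - ip y z.
  by move=> x y z; rewrite ipDl // ipNl.
have ipBr : forall x y z, ip z (x - y) = ip z x - ip z y.
  by move=> x y z; rewrite ipDr // ipNr.
have diag : forall (i : 'I_n) (x : V), \sum_k U i k (Us i k x) = x.
  move=> i0 x.
  pose F (i j : 'I_n) := \sum_k U j k (Us i k x) - (if j == i then x else 0).
  pose Y (i : 'I_n) := \sum_k ip (Us i k x) (Us i k x).
  have A : forall i, \sum_j ip (F i j) (F i j) = ip x x - Y i.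
    move=> i.
    have S1 : \sum_j ip (\sum_k U j k (Us i k x)) (\sum_k U j k (Us i k x)) = Y i.
      under eq_bigr => j _ do rewrite ipsuml //.
      rewrite exchange_big /Y; apply: eq_bigr => k _.
      under eq_bigr => j _ do rewrite ipsumr //.
      rewrite exchange_big /=.
      under eq_bigr => l _ do under eq_bigr => j _ do rewrite HUs.
      under eq_bigr => l _ do rewrite -ipsumr // R3.
      rewrite (bigD1 k) //= eqxx big1 ?addr0 // => l /negbTE ->; exact: ip0r.
    have S2 : \sum_j ip (\sum_k U j k (Us i k x)) (if j == i then x else 0) = Y i.
      rewrite (bigD1 i) //= eqxx [X in _ + X]big1 ?addr0; last first.
        by move=> j Hj; rewrite (negbTE Hj) ip0r.
      rewrite ipsuml //; apply: eq_bigr => k _; by rewrite HUs.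
    have S3 : \sum_j ip (if j == i then x else 0) (\sum_k U j k (Us i k x)) = Y i.
      rewrite (bigD1 i) //= eqxx [X in _ + X]big1 ?addr0; last first.
        by move=> j Hj; rewrite (negbTE Hj) ip0l.
      rewrite ipsumr //; apply: eq_bigr => k _.
      by rewrite HC HUs -HC.
    have S4 : \sum_j ip (if j == i then x else 0) (if j == i then x else 0) = ip x x.
      rewrite (bigD1 i) //= eqxx big1 ?addr0 //.
      by move=> j /negbTE ->; rewrite ip0l.
    rewrite /F; under eq_bigr => j _ do rewrite ipB !ipBr.
    rewrite !sumrB S1 S2 S3 S4.
    set a := Y i; set b := ip x x.
    rewrite subrr sub0r addrC.
    by rewrite opprD opprK.
  have B : \sum_i Y i = ip x x *+ n.
    rewrite /Y exchange_big /=.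
    rewrite -[in RHS](card_ord n) -sumr_const; apply: eq_bigr => k _.
    under eq_bigr => i _ do rewrite -HUs.
    by rewrite -ipsuml // R2 eqxx.
  have T : \sum_i \sum_j ip (F i j) (F i j) = 0.
    under eq_bigr => i _ do rewrite A.
    by rewrite sumrB B sumr_const card_ord subrr.
  have T1 := psumr_eq0P (fun i _ => sumr_ge0 _ (fun j _ => Hpos (F i j))) T.
  have T2 := psumr_eq0P (fun j _ => Hpos (F i0 j)) (T1 i0 isT).
  have := Hdef _ (T2 i0 isT); rewrite /F eqxx.
  by move/eqP; rewrite subr_eq0 => /eqP.
split.
  by move=> k l x; rewrite R3 eq_sym.
move=> k l x; case: eqP => [<-|/eqP kl]; first exact: diag.
by apply: big1 => i _; apply: R4; rewrite eq_sym.
Qed.
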